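(* Let $\beta>0$, $\mu_x,\mu_y\in\mathbb{R}$, and let $X\sim\mathrm{MaxGumbel}(\mu_x,\beta)$ and $Y\sim\mathrm{MinGumbel}(\mu_y,\beta)$ be independent. Then $$\mathbb{E}\big[\max(Y-X,0)\big]=2\beta\,K_0\!\left(2e^{-\frac{\mu_y-\mu_x}{2\beta}}\right),$$ where $K_0$ is the modified Bessel function of the second kind of order $0$.
   Context: $\mathrm{MaxGumbel}(\mu,\beta)$ denotes the distribution on $\mathbb{R}$ with density $\frac1\beta\exp\!\big(-\tfrac{x-\mu}{\beta}-e^{-(x-\mu)/\beta}\big)$; $\mathrm{MinGumbel}(\mu,\beta)$ denotes the distribution with density $\frac1\beta\exp\!\big(\tfrac{x-\mu}{\beta}-e^{(x-\mu)/\beta}\big)$ (the law of $-Z$ for $Z\sim\mathrm{MaxGumbel}(-\mu,\beta)$). $K_0(z)=\int_0^\infty e^{-z\cosh t}\,dt$ for $z>0$. *)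

(* Defs.v *)
From HB Require Import structures.
From mathcomp Require Import all_boot all_order all_algebra.
From mathcomp Require Import all_classical all_reals all_analysis.
Set Implicit Arguments. Unset Strict Implicit. Unset Printing Implicit Defensive.
Import Order.TTheory GRing.Theory Num.Theory.
Import numFieldNormedType.Exports.
Local Open Scope classical_set_scope.
Local Open Scope ring_scope.

Definition maxGumbel_pdf (R : realType) (mu beta : R) (x : R) : R :=
  beta^-1 * expR (- ((x - mu) / beta) - expR (- ((x - mu) / beta))).

Definition minGumbel_pdf (R : realType) (mu beta : R) (x : R) : R :=
  beta^-1 * expR ((x - mu) / beta - expR ((x - mu) / beta)).

Definition has_density d (T : measurableType d) (R : realType)
  (P : probability T R) (X : {RV P >-> R}) (f : R -> R) : Prop :=
  forall A : set R, measurable A ->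
    distribution P X A = (\int[lebesgue_measure]_(x in A) (f x)%:E)%E.

Definition independent_RV d (T : measurableType d) (R : realType)
  (P : probability T R) (X Y : {RV P >-> R}) : Prop :=
  forall A B : set R, measurable A -> measurable B ->
    P (X @^-1` A `&` Y @^-1` B) = (P (X @^-1` A) * P (Y @^-1` B))%E.

(* K_0(z) = int_0^oo exp(-z cosh t) dt, cosh t = (e^t + e^-t)/2 *)
Definition besselK0 (R : realType) (z : R) : \bar R :=
  (\int[lebesgue_measure]_(t in `[0%R, +oo[)
     (expR (- z * ((expR t + expR (- t)) / 2)))%:E)%E.

(* Main.v *)
Require Import Defs.
From HB Require Import structures.
From mathcomp Require Import all_boot all_order all_algebra.
From mathcomp Require Import all_classical all_reals all_analysis.
From mathcomp Require Import measurable_realfun ring.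
Import Order.TTheory GRing.Theory Num.Theory.
Local Open Scope ring_scope.

Module Helpers.
Import numFieldNormedType.Exports.
Local Open Scope classical_set_scope.
Local Open Scope ring_scope.


Section D.
Context {R : realType}.

Lemma ftc_y (f F : R -> R) (a l : R) : (forall x : R, 0 <= f x) -> continuous f ->
  (forall x : R, is_derive x 1 F (f x)) -> F x @[x --> +oo] --> l ->
  (\int[lebesgue_measure]_(x in `[a, +oo[) (f x)%:E = (l - F a)%:E)%E.
Proof.
move=> f0 cf dF Fl.
have cF : continuous F.
  by move=> x; apply/differentiable_continuous/derivable1_diffP; exact: ex_derive.
rewrite EFinB; apply: ge0_continuous_FTC2y => //.
- exact: continuous_subspaceT.
- exact: (cvg_at_right_filter (cF a)).
- by move=> x _; rewrite derive1E derive_val.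
Qed.

Lemma lim_gumbel (m b : R) : 0 < b ->
  expR (- expR (- ((x - m) / b))) @[x --> +oo%R] --> (1:R).
Proof.
move=> b0.
have h1 : (fun x => (x - m) / b) @ +oo --> +oo.
  apply/cvgryPger => A _; near=> x.
  rewrite ler_pdivlMr // lerBrDr.
  near: x; apply: nbhs_pinfty_ge; exact: num_real.
have h2 := cvg_comp _ _ h1 (@cvgr_expR R).
have h3 := cvgN h2.
rewrite oppr0 in h3.
rewrite -expR0.
exact: (cvg_comp _ _ (h3 _) (@continuous_expR R 0)).
Unshelve. all: end_near. Qed.

Lemma is_derive_affine (k c x : R) : is_derive x 1 (fun t : R => k * t + c) k.
Proof.
have h1 : is_derive x 1 (fun t : R => k * t) k.
  exact: (is_derive_eq (@is_deriveZ R R R id k x 1 1 (is_derive_id _ _)) (mulr1 k)).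
exact: (is_derive_eq (@is_deriveD R R R (fun t : R => k * t) (cst c) x 1 k 0 h1 (is_derive_cst _ _ _)) (addr0 k)).
Qed.

Lemma cont_affine (k c : R) : continuous (fun t : R => k * t + c).
Proof.
move=> x; apply/differentiable_continuous/derivable1_diffP.
have h := is_derive_affine k c x. exact: ex_derive.
Qed.

Lemma cont_pdf (m b : R) : continuous (maxGumbel_pdf m b).
Proof.
pose g := fun t : R => (- b^-1) * t + m / b.
have eg : forall x, - ((x - m) / b) = g x.
  by move=> x; rewrite /g mulrBl opprB addrC mulNr mulrC.
have -> : maxGumbel_pdf m b = (fun x => b^-1 * expR (g x - expR (g x))).
  by apply/funext=> x; rewrite /maxGumbel_pdf eg.
have cg : continuous g by exact: cont_affine.
move=> x.
apply: (continuousM (s:=cst b^-1) (t:=fun x => expR (g x - expR (g x)))); first exact: cvg_cst.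
apply: (continuous_comp (f:=fun x => g x - expR (g x)) (g:=expR)); last exact: continuous_expR.
apply: continuousB; first exact: cg.
apply: (continuous_comp (f:=g) (g:=expR)); last exact: continuous_expR.
exact: cg.
Qed.
End D.


Section T.
Context {R : realType}.

Lemma pdf_ge0 (m b : R) x : 0 < b -> 0 <= maxGumbel_pdf m b x.
Proof. by move=> b0; rewrite /maxGumbel_pdf; apply: mulr_ge0; [rewrite invr_ge0 ltW | exact: expR_ge0]. Qed.

Lemma tail_max (m b y : R) : 0 < b ->
  (\int[lebesgue_measure]_(x in `[y, +oo[) (maxGumbel_pdf m b x)%:E =
   (1 - expR (- expR (- ((y - m) / b))))%:E)%E.
Proof.
move=> b0.
pose g := fun t : R => (- b^-1) * t + m / b.
have eg : forall x, - ((x - m) / b) = g x.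
  by move=> x; rewrite /g mulrBl opprB addrC mulNr mulrC.
have eF : (fun x => expR (- expR (- ((x - m) / b)))) = expR \o (- (expR \o g)).
  by apply/funext => x; rewrite /= eg.
rewrite (_ : expR (- expR (- ((y - m) / b))) = (expR \o (- (expR \o g))) y);
  last by rewrite -eF.
apply: ftc_y.
- by move=> x; exact: pdf_ge0.
- exact: cont_pdf.
- move=> x.
  have d1 : is_derive x 1 (expR \o g) (expR (g x) * (- b^-1)).
    have dg : is_derive x 1 g (- b^-1) := is_derive_affine _ _ x.
    exact: (is_derive1_comp (is_derive_expR (g x)) dg).
  have d2 := is_deriveN d1.
  have d3 : is_derive x 1 (expR \o (- (expR \o g))) (expR ((- (expR \o g)) x) * - (expR (g x) * (- b^-1))).
    exact: (is_derive1_comp (is_derive_expR _) d2).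
  apply: (is_derive_eq d3).
  rewrite /maxGumbel_pdf eg (_ : (- (expR \o g)) x = - expR (g x)) //.
  rewrite (expRD (g x) (- expR (g x))); set E := expR (g x); set E1 := expR (- E).
  by rewrite !mulrN opprK mulrC -mulrA mulrCA.
- by rewrite -eF; exact: lim_gumbel.
Qed.
End T.


Lemma oppdiv_lem {R : realType} (x m b : R) : - ((- x - - m) / b) = (x - m) / b.
Proof. by rewrite opprK -mulNr opprD opprK addrC. Qed.

Lemma min_max_pdf {R : realType} (m b x : R) :
  minGumbel_pdf m b x = maxGumbel_pdf (-m) b (-x).
Proof. by rewrite /minGumbel_pdf /maxGumbel_pdf oppdiv_lem. Qed.

Lemma one_sub_sub {R : realType} (e : R) : (1 - (1 - e)%:E)%E = e%:E.
Proof. by rewrite -[1%E]/(1%:E) -EFinB opprB addrC subrK. Qed.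

Section C.
Context d (T : measurableType d) (R : realType) (P : probability T R).

Lemma cdfX (X : {RV P >-> R}) (m b y : R) : 0 < b ->
  has_density X (maxGumbel_pdf m b) ->
  P (X @^-1` `]-oo, y[) = (expR (- expR (- ((y - m) / b))))%:E.
Proof.
move=> b0 hX.
rewrite -setCitvr preimage_setC probability_setC; last exact: (measurable_funPTI _ (measurable_itv _)).
have := hX `[y, +oo[%classic (measurable_itv _).
rewrite /distribution /pushforward => ->.
by rewrite tail_max // one_sub_sub.
Qed.

Lemma ccdfY (Y : {RV P >-> R}) (m b y : R) : 0 < b ->
  has_density Y (minGumbel_pdf m b) ->
  P (Y @^-1` `]y, +oo[) = (expR (- expR ((y - m) / b)))%:E.
Proof.
move=> b0 hY.
rewrite -setCitvl preimage_setC probability_setC; last exact: (measurable_funPTI _ (measurable_itv _)).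
have := hY `]-oo, y]%classic (measurable_itv _).
rewrite /distribution /pushforward => ->.
have eG : minGumbel_pdf m b = maxGumbel_pdf (-m) b \o -%R.
  by apply/funext => x; rewrite /= min_max_pdf.
have := @ge0_integration_by_substitutionNy R (minGumbel_pdf m b) (- y).
rewrite opprK => ->; last 2 first.
- rewrite eG; apply: continuous_subspaceT => x.
  apply: continuous_comp; first exact: opp_continuous.
  exact: cont_pdf.
- by move=> x _; rewrite min_max_pdf; exact: pdf_ge0.
have -> : (fun x => ((minGumbel_pdf m b \o -%R) x)%:E) = (fun x => (maxGumbel_pdf (-m) b x)%:E).
  by apply/funext => x; rewrite /= min_max_pdf opprK.
by rewrite tail_max // oppdiv_lem one_sub_sub.
Qed.
End C.


Section F.
Context {R : realType}.

Lemma cont_expNexp (k c : R) : continuous (fun y : R => expR (- expR (k * y + c))).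
Proof.
move=> x.
apply: (continuous_comp (f := fun y => - expR (k * y + c)) (g := expR)); last exact: continuous_expR.
apply: continuousN.
apply: (continuous_comp (f := fun y => k * y + c) (g := expR)); last exact: continuous_expR.
exact: cont_affine.
Qed.

Lemma cont_cosh (z : R) : continuous (fun s : R => expR (- z * ((expR s + expR (- s)) / 2))).
Proof.
move=> x.
apply: (continuous_comp (f := fun s => - z * ((expR s + expR (- s)) / 2)) (g := expR)); last exact: continuous_expR.
apply: (continuousM (s := cst (- z)) (t := fun s => (expR s + expR (- s)) / 2)); first exact: cvg_cst.
apply: (continuousM (s := fun s => expR s + expR (- s)) (t := cst (2^-1))); last exact: cvg_cst.
apply: (continuousD (f := expR) (g := fun s => expR (- s))); first exact: continuous_expR.
apply: (continuous_comp (f := -%R) (g := expR)); last exact: continuous_expR.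
exact: opp_continuous.
Qed.

Lemma final_int (mx my b : R) : 0 < b ->
  (\int[lebesgue_measure]_y (expR (- expR (- ((y - mx) / b))) * expR (- expR ((y - my) / b)))%:E
  = (2 * b)%:E * besselK0 (2 * expR (- ((my - mx) / (2 * b)))))%E.
Proof.
move=> b0.
have bn0 : b != 0 by rewrite gt_eqF.
set c := (my - mx) / (2 * b).
set z := 2 * expR (- c).
pose G := fun y => expR (- expR (- ((y - mx) / b))) * expR (- expR ((y - my) / b)).
pose F := fun s : R => b * s + (mx + my) / 2.
pose k := fun s : R => expR (- z * ((expR s + expR (- s)) / 2)).
have GF : forall s, G (F s) = k s.
  move=> s; rewrite /G /F /k -expRD; congr expR.
  have e1 : - ((b * s + (mx + my) / 2 - mx) / b) = - s + - c.
    by rewrite /c; field; rewrite bn0.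
  have e2 : (b * s + (mx + my) / 2 - my) / b = s + - c.
    by rewrite /c; field; rewrite bn0.
  by rewrite e1 e2 !expRD /z; field.
have dF : forall x : R, is_derive x 1 F b by move=> x; exact: is_derive_affine.
have F'E : (F^`())%classic = cst b.
  by apply/funext => x; rewrite derive1E derive_val.
have cG : continuous G.
  have eG : G = (fun y => expR (- expR ((- b^-1) * y + mx / b)) * expR (- expR (b^-1 * y + - (my / b)))).
    apply/funext => y; rewrite /G; congr (expR (- expR _) * expR (- expR _)).
      by field.
    by field.
  rewrite eG => x.
  apply: (continuousM (s := fun y => expR (- expR ((- b^-1) * y + mx / b)))
                      (t := fun y => expR (- expR (b^-1 * y + - (my / b))))).
    exact: cont_expNexp.
  exact: cont_expNexp.
have G0 : forall y, 0 <= G y by move=> y; rewrite /G mulr_ge0 ?expR_ge0.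
have hinc : {homo F : x y / x < y}.
  by move=> x y xy; rewrite /F ltrD2r ltr_pM2l.
have hc' : continuous (F^`())%classic by rewrite F'E; exact: cst_continuous.
have hNy : cvg ((F^`())%classic x @[x --> -oo]) by rewrite F'E; exact: is_cvg_cst.
have hy : cvg ((F^`())%classic x @[x --> +oo]) by rewrite F'E; exact: is_cvg_cst.
have hd : forall x, derivable F x 1 by move=> x; exact: ex_derive.
have hFNy : F x @[x --> -oo%R] --> -oo%R.
  apply/cvgrNyPler => A _; near=> x.
  rewrite /F -lerBrDr [b * x]mulrC -ler_pdivlMr; last exact: b0.
  near: x; apply: nbhs_ninfty_le; exact: num_real.
have hFy : F x @[x --> +oo%R] --> +oo%R.
  apply/cvgryPger => A _; near=> x.
  rewrite /F -lerBlDr [b * x]mulrC -ler_pdivrMr; last exact: b0.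
  near: x; apply: nbhs_pinfty_ge; exact: num_real.
rewrite (@increasing_ge0_integration_by_substitutionT R F G hinc hc' hNy hy hd hFNy hFy cG G0).
have -> : (fun x => (((G \o F) * (F^`())%classic) x)%:E) = (fun x => b%:E * (k x)%:E)%E.
  by apply/funext => x; rewrite F'E (_ : ((G \o F) * cst b) x = G (F x) * b) // GF -EFinM mulrC.
have ck : continuous k by exact: cont_cosh.
rewrite ge0_integralZl_EFin //; last 2 first.
- by apply/measurable_EFinP; exact: continuous_measurable_fun.
- exact: ltW.
rewrite ge0_symfun_integralT //; last 2 first.
- by move=> x; exact: expR_ge0.
- by move=> x; rewrite /k /comp opprK addrC.
rewrite -set_itvcy /besselK0 -/z.
by rewrite muleA -EFinM mulrC.
Unshelve. all: end_near. by move=> x _; rewrite lee_fin expR_ge0. Qed.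
End F.


Section S.
Context d (T : measurableType d) (R : realType) (P : probability T R).
Variables (X Y : {RV P >-> R}).
Local Open Scope ereal_scope.

Let S := [set p : T * R | (X p.1 < p.2)%R /\ (p.2 < Y p.1)%R].

Let mS : measurable S.
Proof.
have m1 : measurable_fun setT (fun p : T * R => (X p.1 < p.2)%R).
  apply: measurable_fun_ltr; last exact: measurable_snd.
  by apply: measurableT_comp => //; exact: measurable_fst.
have m2 : measurable_fun setT (fun p : T * R => (p.2 < Y p.1)%R).
  apply: measurable_fun_ltr; first exact: measurable_snd.
  by apply: measurableT_comp => //; exact: measurable_fst.
have := m1 measurableT [set true] I; rewrite setTI => h1.
have := m2 measurableT [set true] I; rewrite setTI => h2.
have -> : S = ((fun p : T * R => (X p.1 < p.2)%R) @^-1` [set true]) `&`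
              ((fun p : T * R => (p.2 < Y p.1)%R) @^-1` [set true]).
  by apply/seteqP; split => p /= [q1 q2]; split.
exact: measurableI.
Qed.

Lemma E_as_int :
 'E_P[fun w => (Num.max (Y w - X w) 0)%R] =
  \int[lebesgue_measure]_y P (X @^-1` `]-oo, y%R[ `&` Y @^-1` `]y%R, +oo[).
Proof.
rewrite unlock.
transitivity (\int[P]_w \int[lebesgue_measure]_y (\1_S (w, y))%:E).
  apply: eq_integral => w _.
  have -> : (fun y => (\1_S (w, y))%:E) = (fun y => (\1_(`](X w)%R, (Y w)%R[%classic) y)%:E :> \bar R).
    apply/funext => y; rewrite !indicE; congr (_%:R%:E).
    congr nat_of_bool; apply/idP/idP => /set_mem; rewrite /= ?in_itv /=; [case=> q1 q2; apply/mem_set; rewrite /= in_itv /= q1 q2 //| move/andP => [q1 q2]; apply/mem_set; split =>//].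
  rewrite integral_indic //= setIT lebesgue_measure_itv /= lte_fin.
  case: ltP => h.
    by rewrite -EFinB max_l // subr_ge0 ltW.
  by rewrite max_r // subr_le0.
rewrite (@fubini_tonelli _ _ _ _ _ P lebesgue_measure (fun p => (\1_S p)%:E)) //; last first.
  by apply/measurable_EFinP; exact: measurable_indic.
apply: eq_integral => y _.
have -> : (fun w => (\1_S (w, y))%:E) =
   (fun w => (\1_(X @^-1` `]-oo, y%R[ `&` Y @^-1` `]y%R, +oo[) w)%:E :> \bar R).
  apply/funext => w; rewrite !indicE; congr (_%:R%:E).
  congr nat_of_bool; apply/idP/idP => /set_mem; rewrite /=.
   by case=> q1 q2; apply/mem_set; split; rewrite /= in_itv /= ?q1 ?q2.
  by rewrite /preimage /= !in_itv /= andbT => -[q1 q2]; apply/mem_set; split.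
rewrite integral_indic ?setIT //.
by apply: measurableI; apply: measurable_funPTI.
Qed.
End S.

End Helpers.
Import Helpers.

Theorem mainTheorem2 (d : measure_display) (T : measurableType d)
  (R : realType) (P : probability T R) (beta mux muy : R)
  (X Y : {RV P >-> R}) :
  0 < beta ->
  has_density X (maxGumbel_pdf mux beta) ->
  has_density Y (minGumbel_pdf muy beta) ->
  independent_RV X Y ->
  ('E_P[(fun w => Num.max (Y w - X w) 0)%R] =
     (2 * beta)%:E * besselK0 (2 * expR (- ((muy - mux) / (2 * beta)))))%E.
Proof.
move=> b0 hX hY hI.
rewrite E_as_int -final_int //.
apply: eq_integral => y _.
rewrite hI; last 2 first.
- exact: measurable_itv.
- exact: measurable_itv.
by rewrite (@cdfX _ _ _ _ _ _ _ y b0 hX) (@ccdfY _ _ _ _ _ _ _ y b0 hY) -EFinM.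
Qed.
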